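(* Let $a<b$ and let $f:[a,b]\rightarrow\mathbb{R}$ be a differentiable mapping in $(a,b)$ such that $f'\in L^1[a,b]$ and $\gamma\le f'(x)\le \Gamma$ for all $x\in [a,b]$, where $\gamma,\Gamma$ are real constants. Assume additionally that $f(a+b-x)=f(x)$ for all $x\in[a,b]$. Put $S=\frac{f(b)-f(a)}{b-a}$. Then for all $x\in[a,\frac{a+b}{2}]$, \[ \left|f(x)-\frac{1}{b-a}\int_{a}^{b}f(t)\,dt\right|\leq \left[\frac{b-a}{4}+\left|x-\frac{3a+b}{4}\right|\right] (S-\gamma) \] and \[ \left|f(x)-\frac{1}{b-a}\int_{a}^{b}f(t)\,dt\right|\leq \left[\frac{b-a}{4}+\left|x-\frac{3a+b}{4}\right|\right] (\Gamma-S). \] *)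

(* Defs.v *)
From HB Require Import structures.
From mathcomp Require Import all_boot all_order all_algebra.
From mathcomp Require Import all_classical all_reals all_analysis.
Set Implicit Arguments. Unset Strict Implicit. Unset Printing Implicit Defensive.
Import Order.TTheory GRing.Theory Num.Theory.
Import numFieldNormedType.Exports.

(* Main.v *)
From HB Require Import structures.
From mathcomp Require Import all_boot all_order all_algebra.
From mathcomp Require Import all_classical all_reals all_analysis.
From mathcomp Require Import ring lra.
Import Order.TTheory GRing.Theory Num.Theory.
Import numFieldNormedType.Exports.
Local Open Scope classical_set_scope.
Local Open Scope ring_scope.

Lemma incr (R : realType) (a b gamma Gamma : R) (f : R -> R) :
  {within `[a, b], continuous f} ->
  (forall x, x \in `]a, b[ -> derivable f x 1) ->
  (forall x, x \in `]a, b[ -> gamma <= derive1 f x <= Gamma) ->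
  forall u v, a <= u -> u <= v -> v <= b ->
  gamma * (v - u) <= f v - f u <= Gamma * (v - u).
Proof.
move=> fc fd fb u v au uv vb.
have [->|uv'] := eqVneq u v; first by rewrite !subrr !mulr0 lexx.
have ltuv : u < v by rewrite lt_neqAle uv' uv.
have sub : forall z, z \in `]u, v[ -> z \in `]a, b[.
  move=> z; rewrite !in_itv /= => /andP[h1 h2].
  by rewrite (le_lt_trans au h1) (lt_le_trans h2 vb).
have hd : forall z, z \in `]u, v[ -> is_derive z 1 f (derive1 f z).
  move=> z /sub /fd dz; rewrite derive1E; exact: derivableP.
have hc : {within `[u, v], continuous f}.
  apply: continuous_subspaceW fc => z /=; rewrite !in_itv /= => /andP[h1 h2].
  by rewrite (le_trans au h1) (le_trans h2 vb).
have [c cuv ->] := @MVT R f (derive1 f) u v ltuv hd hc.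
have /fb/andP[g1 g2] := sub c cuv.
have vu0 : 0 <= v - u by rewrite subr_ge0.
by rewrite !ler_wpM2r.
Qed.

Lemma lip (R : realType) (a b gamma Gamma : R) (f : R -> R) :
  {within `[a, b], continuous f} ->
  (forall x, x \in `]a, b[ -> derivable f x 1) ->
  (forall x, x \in `]a, b[ -> gamma <= derive1 f x <= Gamma) ->
  (forall x, x \in `[a, b] -> f (a + b - x) = f x) ->
  forall u v, a <= u -> u <= v -> v <= b ->
  `|f v - f u| <= Gamma * (v - u) /\ `|f v - f u| <= - gamma * (v - u).
Proof.
move=> fc fd fb sym u v au uv vb.
have /andP[h1 h2] := @incr R a b gamma Gamma f fc fd fb _ _ au uv vb.
have h3 : a <= a + b - v by lra.
have h4 : a + b - v <= a + b - u by lra.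
have h5 : a + b - u <= b by lra.
have /andP[h6 h7] := @incr R a b gamma Gamma f fc fd fb _ _ h3 h4 h5.
have e1 : f (a + b - u) = f u by rewrite sym // in_itv /= au (le_trans uv vb).
have e2 : f (a + b - v) = f v by rewrite sym // in_itv /= vb (le_trans au uv).
rewrite e1 e2 in h6 h7.
move: h6 h7; have -> : a + b - u - (a + b - v) = v - u by ring.
move=> h6 h7.
rewrite !ler_norml mulNr.
split; apply/andP; split; lra.
Qed.

Lemma lip2 (R : realType) (a b gamma Gamma : R) (f : R -> R) :
  {within `[a, b], continuous f} ->
  (forall x, x \in `]a, b[ -> derivable f x 1) ->
  (forall x, x \in `]a, b[ -> gamma <= derive1 f x <= Gamma) ->
  (forall x, x \in `[a, b] -> f (a + b - x) = f x) ->
  forall u v, a <= u <= b -> a <= v <= b ->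
  `|f v - f u| <= Gamma * `|v - u| /\ `|f v - f u| <= - gamma * `|v - u|.
Proof.
move=> fc fd fb sym u v /andP[au ub] /andP[av vb].
have [uv|vu] := leP u v.
  by rewrite (ger0_norm (_ : 0 <= v - u)) ?subr_ge0 //; exact: (@lip R a b gamma Gamma f fc fd fb sym).
rewrite distrC (distrC v) (ger0_norm (_ : 0 <= u - v)) ?subr_ge0 ?(ltW vu) //.
exact: (@lip R a b gamma Gamma f fc fd fb sym _ _ av (ltW vu) ub).
Qed.

Theorem corollary2p4 (R : realType) (a b gamma Gamma : R) (f : R -> R) :
  a < b ->
  {within `[a, b], continuous f} ->
  (forall x, x \in `]a, b[ -> derivable f x 1) ->
  (@lebesgue_measure R).-integrable `[a, b]
    (EFin \o (derive1 f)) ->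
  (forall x, x \in `]a, b[ -> gamma <= derive1 f x <= Gamma) ->
  (forall x, x \in `[a, b] -> f (a + b - x) = f x) ->
  let S := (f b - f a) / (b - a) in
  forall x, x \in `[a, (a + b) / 2] ->
    `| f x - (b - a)^-1 * \int[@lebesgue_measure R]_(t in `[a, b]) f t |
      <= ((b - a) / 4 + `| x - (3 * a + b) / 4 |) * (S - gamma)
    /\
    `| f x - (b - a)^-1 * \int[@lebesgue_measure R]_(t in `[a, b]) f t |
      <= ((b - a) / 4 + `| x - (3 * a + b) / 4 |) * (Gamma - S).
Proof.
move=> ab fc fd _ fb sym S x.
rewrite in_itv /= => /andP[ax xm].
have fab : f b = f a.
  have := sym a; rewrite in_itv /= lexx ltW //= => /(_ isT).
  by have -> : a + b - a = b by ring.
have -> : S = 0 by rewrite /S fab subrr mul0r.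
rewrite sub0r subr0.
set K := (b - a) / 4 + `|x - (3 * a + b) / 4|.
have hK1 : x - (3 * a + b) / 4 <= `|x - (3 * a + b) / 4| := ler_norm _.
have hK2 : - (x - (3 * a + b) / 4) <= `|x - (3 * a + b) / 4|.
  by rewrite -normrN; exact: ler_norm.
have abab : a <= a <= b by rewrite lexx ltW.
have bbab : a <= b <= b by rewrite lexx ltW.
have [G0 g0] := @lip2 R a b gamma Gamma f fc fd fb sym _ _ abab bbab.
rewrite fab subrr normr0 in G0 g0.
have ba0 : 0 < `|b - a| by rewrite normr_gt0 subr_eq0 gt_eqF.
rewrite pmulr_lge0 // in G0; rewrite pmulr_lge0 // in g0.
have xab : a <= x <= b by rewrite ax /=; lra.
have pt : forall t, a <= t <= b -> forall C, C = Gamma \/ C = - gamma ->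
    `|f x - f t| <= K * C.
  move=> t tab C hC.
  have C0 : 0 <= C by case: hC => ->.
  have key : forall s, a <= s <= (a + b) / 2 -> `|f x - f s| <= K * C.
    move=> s /andP[hs sm].
    have sab : a <= s <= b by rewrite hs /=; lra.
    have [L1 L2] := @lip2 R a b gamma Gamma f fc fd fb sym _ _ sab xab.
    have dK : `|x - s| <= K.
      rewrite ler_norml; apply/andP; split; rewrite /K; lra.
    rewrite (mulrC K).
    case: hC => ->; [apply: le_trans L1 _|apply: le_trans L2 _];
      apply: ler_wpM2l => //.
  case/andP: tab => ha tb.
  have [tm|mt] := leP t ((a + b) / 2); first by apply: key; rewrite ha.
  rewrite -(sym t) ?in_itv /= ?ha //; apply: key; apply/andP; split; lra.
have fint : (@lebesgue_measure R).-integrable `[a, b] (EFin \o f).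
  apply: continuous_compact_integrable; [exact: segment_compact | exact: fc].
have cint : forall c : R, (@lebesgue_measure R).-integrable `[a, b] (EFin \o (fun=> c)).
  move=> c; apply: continuous_compact_integrable; first exact: segment_compact.
  by apply: continuous_subspaceT => z; exact: cst_continuous.
have mab : measurable (`[a, b] : set R) by exact: measurable_itv.
have muab : fine (@lebesgue_measure R `[a, b]) = b - a.
  by rewrite lebesgue_measure_itv /= lte_fin ab -EFinD.
have bnd : forall C, C = Gamma \/ C = - gamma ->
    `| f x - (b - a)^-1 * \int[@lebesgue_measure R]_(t in `[a, b]) f t | <= K * C.
  move=> C hC.
  set I := \int[@lebesgue_measure R]_(t in `[a, b]) f t.
  have lo : \int[@lebesgue_measure R]_(t in `[a, b]) (f x - K * C) <= I.
    apply: le_Rintegral => // t ht.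
    have tab : a <= t <= b by move: ht; rewrite /= in_itv.
    have := pt t tab C hC; rewrite ler_norml => /andP[] ? ?; lra.
  have hi : I <= \int[@lebesgue_measure R]_(t in `[a, b]) (f x + K * C).
    apply: le_Rintegral => // t ht.
    have tab : a <= t <= b by move: ht; rewrite /= in_itv.
    have := pt t tab C hC; rewrite ler_norml => /andP[] ? ?; lra.
  rewrite !Rintegral_cst // muab in lo hi.
  have ba : 0 < b - a by rewrite subr_gt0.
  have eI : I = ((b - a)^-1 * I) * (b - a) by field; rewrite gt_eqF.
  rewrite eI in lo hi.
  rewrite ler_pM2r // in lo; rewrite ler_pM2r // in hi.
  rewrite ler_norml; apply/andP; split; lra.
split; apply: bnd; [right | left]; done.
Qed.
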